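(* Let $\alpha\in(0,1)$ and run GD with learning rate $\eta$ from $\mathbf{W}_0=\mathbf{0}$, where $\eta p_1\lesssim1$. Then for every $j\in[K]$ and every sufficiently large training time $t\gg\frac{\log\log K}{\eta p_j}$, $$\mathcal{L}_j^{\mathrm{GD}}(t)-\mathcal{L}_j^*\gtrsim e^{-\eta p_j t}(\log K)^2,$$ where $\mathcal{L}_j^*=-\big(1-\alpha+\tfrac{\alpha}{K}\big)\log\big(1-\alpha+\tfrac{\alpha}{K}\big)-\tfrac{\alpha(K-1)}{K}\log\tfrac{\alpha}{K}$ is the minimal sub-task loss.
   Context: Setup: $K=MC$ items in $M$ groups of $C$ items (group $i$: indices $(i-1)C+1,\dots,iC$); $\widetilde p_1>\dots>\widetilde p_M>0$, $\sum_i\widetilde p_i=1$, $p_j=\widetilde p_i/C$ for $j$ in group $i$. $\mathbf{E},\widetilde{\mathbf{E}}\in\mathbb{R}^{K\times K}$ have orthonormal columns. Noise: $p_{i\mid j}=1-\alpha+\alpha/K$ if $i=j$, $\alpha/K$ otherwise. $\widehat p_{i\mid j}(\mathbf{W})=\exp(\widetilde{\mathbf{E}}_i^\top\mathbf{W}\mathbf{E}_j)/\sum_k\exp(\widetilde{\mathbf{E}}_k^\top\mathbf{W}\mathbf{E}_j)$; $\mathcal{L}_j(\mathbf{W})=-\sum_ip_{i\mid j}\log\widehat p_{i\mid j}(\mathbf{W})$, $\mathcal{L}=\sum_jp_j\mathcal{L}_j$. GD: $\mathbf{W}_{t+1}=\mathbf{W}_t-\eta\nabla\mathcal{L}(\mathbf{W}_t)$,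 $\mathcal{L}^{\mathrm{GD}}_j(t)=\mathcal{L}_j(\mathbf{W}_t)$. Regime $K\gg1$, $M\ll C$; $\lesssim,\gtrsim$ hide constant factors and $\gg$ means ''much larger than''. *)

(* Defs.v *)
From mathcomp Require Import all_boot all_order all_algebra.
From mathcomp Require Import all_classical all_reals all_analysis.
Set Implicit Arguments. Unset Strict Implicit. Unset Printing Implicit Defensive.
Import Order.TTheory GRing.Theory Num.Theory.
Local Open Scope ring_scope.

Section Defs.
Variable R : realType.
Variable K : nat.

Definition orthonormal_cols (E : 'M[R]_K) : Prop := E^T *m E = 1%:M.

Definition pnoise (alpha : R) (i j : 'I_K) : R :=
  if i == j then 1 - alpha + alpha / K%:R else alpha / K%:R.

Definition logit (E Et W : 'M[R]_K) (i j : 'I_K) : R :=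
  ((col i Et)^T *m W *m col j E) 0 0.

Definition phat (E Et W : 'M[R]_K) (i j : 'I_K) : R :=
  expR (logit E Et W i j) / \sum_(k < K) expR (logit E Et W k j).

Definition Lj (alpha : R) (E Et W : 'M[R]_K) (j : 'I_K) : R :=
  - \sum_(i < K) pnoise alpha i j * ln (phat E Et W i j).

Definition Ltot (p : 'I_K -> R) (alpha : R) (E Et W : 'M[R]_K) : R :=
  \sum_(j < K) p j * Lj alpha E Et W j.

Definition grad (f : 'M[R]_K -> R) (W : 'M[R]_K) : 'M[R]_K :=
  \matrix_(a < K, b < K) derive1 (fun h : R => f (W + h *: delta_mx a b)) 0.

Definition gd_iter (f : 'M[R]_K -> R) (eta : R) (t : nat) : 'M[R]_K :=
  iter t (fun W => W - eta *: grad f W) 0.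

Definition Lstar (alpha : R) : R :=
  - (1 - alpha + alpha / K%:R) * ln (1 - alpha + alpha / K%:R)
  - alpha * (K%:R - 1) / K%:R * ln (alpha / K%:R).
End Defs.

(* group-structured frequencies: item j (0-indexed) lies in group j %/ C,
   p_j = ptilde_{group(j)} / C *)
Lemma grp_lt (M C : nat) (j : 'I_(M * C)) : (j %/ C < M)%N.
Proof.
have hj : (nat_of_ord j < M * C)%N := ltn_ord j.
move: hj; move: (nat_of_ord j) => n hj.
have hC : (0 < C)%N.
  by rewrite lt0n; apply/eqP => C0; move: hj; rewrite C0 muln0.
by rewrite ltn_divLR.
Qed.

Definition grp (M C : nat) (j : 'I_(M * C)) : 'I_M := Ordinal (grp_lt j).

Definition pgroup (R : realType) (M C : nat) (pt : 'I_M -> R) (j : 'I_(M * C)) : R :=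
  pt (grp j) / C%:R.

(* Main.v *)
Require Import Defs.
From mathcomp Require Import all_boot all_order all_algebra.
From mathcomp Require Import all_classical all_reals all_analysis.
From mathcomp Require Import ring lra.
Import Order.TTheory GRing.Theory Num.Theory.
Import numFieldTopology.Exports numFieldNormedType.Exports.
Local Open Scope ring_scope.
Set Implicit Arguments. Unset Strict Implicit. Unset Printing Implicit Defensive.

Section A.
Variable R : realType.

Lemma dZ (f : R -> R) (df k x : R) : is_derive x 1 f df -> is_derive x 1 (fun h => k * f h) (k * df).
Proof. move=> H; exact: is_deriveZ. Qed.
Lemma dN (f : R -> R) (df x : R) : is_derive x 1 f df -> is_derive x 1 (fun h => - f h) (- df).
Proof. move=> H; exact: is_deriveN. Qed.
Lemma dD (f g : R -> R) (df dg x : R) : is_derive x 1 f df -> is_derive x 1 g dg ->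
  is_derive x 1 (fun h => f h + g h) (df + dg).
Proof. move=> H1 H2; exact: is_deriveD. Qed.
Lemma dexp (f : R -> R) (df x : R) : is_derive x 1 f df -> is_derive x 1 (fun h => expR (f h)) (expR (f x) * df).
Proof. move=> H; exact: is_derive1_comp. Qed.

Definition fU (N u : R) := 1 - (N + 1) * (expR u + N)^-1.

Lemma fU_lip (N a b : R) : 2 <= N -> a <= b -> fU N b - fU N a <= 3/8 * (b - a).
Proof.
move=> HN hab.
have Hd : forall x : R, is_derive x 1 (fU N)
   (0 + - ((N + 1) * (- (expR x + N) ^- 2 *: (expR x * 1 + 0)))).
  move=> x.
  have H1 : is_derive x 1 (fun u : R => expR u + N) (expR x * 1 + 0).
    exact: (dD (dexp (is_derive_id x 1)) (is_derive_cst N x 1)).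
  have H0 : expR x + N != 0.
    by apply/lt0r_neq0; apply: ltr_pwDl; [exact: expR_gt0|lra].
  have H2 := is_deriveV (f := fun u : R => expR u + N) H0 H1.
  have H3 := dZ (N + 1) H2.
  exact: (dD (is_derive_cst (1:R) x 1) (dN H3)).
have HM := MVT_segment hab (fun x _ => Hd x).
case: HM => [|c _ Hc].
  apply: continuous_subspaceT => r.
  exact/differentiable_continuous/derivable1_diffP/(@ex_derive _ _ _ _ _ _ _ (Hd r)).
  rewrite Hc; apply: ler_wpM2r; first by lra.
  set e := expR c.
  have he : 0 < e by exact: expR_gt0.
  have hen : 0 < e + N by lra.
  have -> : 0 - (N + 1) * (- (e + N) ^- 2 *: (e * 1 + 0)) = (N + 1) * e / (e + N) ^+ 2.
    rewrite /GRing.scale /=; field; lra.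
  rewrite ler_pdivrMr; last by apply: exprn_gt0.
  have h1 : 0 <= (e - N) ^+ 2 by apply: sqr_ge0.
  have h2 : 0 <= e * (N - 2) by apply: mulr_ge0; lra.
  rewrite expr2 in h1 *.
  nra.
Qed.


Lemma ln_le_sub1 (x : R) : 0 < x -> ln x <= x - 1.
Proof.
move=> hx; have := @le_ln1Dx R (x - 1); rewrite (_ : 1 + (x - 1) = x); last by ring. by apply; lra.
Qed.

Lemma gap_hell (q s N be r : R) : 0 < q -> q <= 1 -> 0 < s -> 0 < be -> 0 < r -> 0 <= N ->
  q + N * be = 1 -> s + N * r = 1 ->
  (q - s) ^+ 2 / 4 <= q * (ln q - ln s) + N * be * (ln be - ln r).
Proof.
move=> hq hq1 hs hb hr hN Hq Hs.
have H1 : N * be * (1 - r / be) <= N * be * (ln be - ln r).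
  apply: ler_wpM2l; first by apply: mulr_ge0; lra.
  have := ln_le_sub1 (divr_gt0 hr hb); rewrite ln_div ?posrE //; lra.
have E1 : N * be * (1 - r / be) = N * be - N * r by field; lra.
set sg := Num.sqrt (s / q).
have hsg : 0 < sg by rewrite sqrtr_gt0; exact: divr_gt0.
have Esg : sg ^+ 2 = s / q by rewrite sqr_sqrtr // ltW // divr_gt0.
have Es : s = q * sg ^+ 2 by rewrite Esg; field; lra.
have H2 : q * (2 * (1 - sg)) <= q * (ln q - ln s).
  apply: ler_wpM2l; first lra.
  have : ln (s / q) = 2 * ln sg.
    by rewrite -Esg expr2 lnM ?posrE //; ring.
  rewrite ln_div ?posrE // => Hl.
  have := ln_le_sub1 hsg; lra.
have Hs1 : s <= 1 by nra.
have H3 : q * (1 + sg) ^+ 2 <= 4.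
  have : 0 <= (1 - sg) ^+ 2 by apply: sqr_ge0.
  rewrite Es in Hs1; nra.
rewrite Es in H1 E1 H2 Hs *.
have H4 : 0 <= q * (1 - sg) ^+ 2 by apply: mulr_ge0; [lra|apply: sqr_ge0].
have : (q - q * sg ^+ 2) ^+ 2 / 4 = q * (1 - sg) ^+ 2 * (q * (1 + sg) ^+ 2 / 4) by field.
move=> ->.
have H5 : q * (1 - sg) ^+ 2 * (q * (1 + sg) ^+ 2 / 4) <= q * (1 - sg) ^+ 2.
  rewrite -[X in _ <= X]mulr1; apply: ler_wpM2l => //; lra.
apply: (le_trans H5).
have : q * (1 - sg) ^+ 2 = q * (2 * (1 - sg)) + (N * be - N * (r)) by nra.
lra.
Qed.


Definition sU (N u : R) := expR u / (expR u + N).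
Definition rU (N u : R) := (expR u + N)^-1.

Lemma qs_bound (N E w : R) : 0 <= N -> 0 < E -> 0 <= w ->
  E / (E + N) * (1 - E / (E + N)) * (1 - expR (- w)) <=
  E / (E + N) - E * expR (- w) / (E * expR (- w) + N).
Proof.
move=> hN hE hw.
set v := expR (- w).
have hv : 0 < v by exact: expR_gt0.
have hv1 : v <= 1 by rewrite /v expR_le1; lra.
have hEN : 0 < E + N by lra.
have hEv : 0 < E * v + N by apply: ltr_pwDl => //; exact: mulr_gt0.
rewrite -subr_ge0.
have -> : E / (E + N) - E * v / (E * v + N) - E / (E + N) * (1 - E / (E + N)) * (1 - v)
   = E ^+ 2 * N * (1 - v) ^+ 2 / ((E + N) ^+ 2 * (E * v + N)).
  by field; apply/andP; split; apply/lt0r_neq0.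
apply: divr_ge0; last by apply: mulr_ge0; [apply: sqr_ge0|lra].
apply: mulr_ge0; last by apply: sqr_ge0.
by apply: mulr_ge0 => //; apply: sqr_ge0.
Qed.

Lemma one_m_expN1 (w : R) : 0 <= w -> w <= 1 -> w / 2 <= 1 - expR (- w).
Proof.
move=> hw hw1.
have h1 := @expR_ge1Dx R w.
have hE : expR (- w) * expR w = 1 by rewrite mulrC expRxMexpNx_1.
have hpos : 0 < expR (- w) by exact: expR_gt0.
nra.
Qed.

Lemma one_m_expN2 (w : R) : 1 <= w -> 1 / 2 <= 1 - expR (- w).
Proof.
move=> hw1.
have hE : expR (- w) * expR w = 1 by rewrite mulrC expRxMexpNx_1.
have hpos : 0 < expR (- w) by exact: expR_gt0.
have h2 : expR 1 <= expR w by rewrite ler_expR.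
have h3 := @expR_ge1Dx R 1.
nra.
Qed.

Lemma main_analytic (al N y : R) (U : nat -> R) (t : nat) :
  0 < al -> al < 1 -> 2 <= N -> 1 / (1 - al) ^+ 2 <= N + 1 -> 0 < y -> y <= 1 / 4 ->
  U 0%N = 0 ->
  (forall n, U n.+1 = U n + y * ((1 - al) - fU N (U n))) ->
  2 * ln (ln (N + 1)) <= y * t%:R ->
  (1 - al) ^+ 2 * al ^+ 2 / 256 * expR (- (y * t%:R)) * ln (N + 1) ^+ 2 <=
  (1 - al + al / (N + 1)) * (ln (1 - al + al / (N + 1)) - ln (sU N (U t)))
  + N * (al / (N + 1)) * (ln (al / (N + 1)) - ln (rU N (U t))).
Proof.
move=> ha0 ha1 hN hK hy0 hy1 U0 US hx.
set K := N + 1.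
set q := 1 - al + al / K.
set be := al / K.
have hK0 : 0 < K by rewrite /K; lra.
have hbe : 0 < be by apply: divr_gt0.
have hq : 1 - al < q by rewrite /q; have := hbe; rewrite /be; lra.
have hq0 : 0 < q by lra.
have hqN : q + N * be = 1.
  by rewrite /q /be /K; field; apply/lt0r_neq0; lra.
have hNbe : 0 <= N * be by apply: mulr_ge0; lra.
have hq1 : q <= 1 by lra.
set Es := q / be.
have hEs : 0 < Es by apply: divr_gt0.
set us := ln Es.
have Eus : expR us = Es by rewrite /us lnK // posrE.
have fus : fU N us = 1 - al.
  rewrite /fU Eus /Es.
  rewrite /q /be /K; field.
  by apply/andP; split; apply/lt0r_neq0; lra.
set L := ln K.
have hL : 0 < L by rewrite /L ln_gt0 // /K; lra.
have hus : L / 2 <= us.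
  have hE1 : (1 - al) * K <= Es.
    have -> : Es = q * K / al by rewrite /Es /be; field; apply/andP; split; apply/lt0r_neq0; lra.
    rewrite ler_pdivlMr //.
    have h1 : 0 <= (1 - al) * K by apply: mulr_ge0; lra.
    nra.
  have hE2 : K <= Es ^+ 2.
    have h1 : 1 <= (1 - al) ^+ 2 * K.
      have ha : 0 < 1 - al by lra.
      by move: hK; rewrite -/K ler_pdivrMr ?exprn_gt0 // mulrC.
    have h2 : 0 <= (1 - al) * K by apply: mulr_ge0; lra.
    nra.
  have : ln K <= ln (Es ^+ 2) by rewrite ler_ln // posrE // exprn_gt0.
  rewrite lnXn // -/us -/L; lra.
have hus0 : 0 < us by lra.
set rho := 1 - 3 / 8 * y.
have hrho : 0 <= rho by rewrite /rho; lra.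
have Hw : forall n, rho ^+ n * us <= us - U n.
  elim => [|n IH]; first by rewrite U0 expr0 mul1r subr0.
  have hP : 0 <= rho ^+ n * us by apply: mulr_ge0; [apply: exprn_ge0|lra].
  have hU : U n <= us by lra.
  have hl := fU_lip hN hU; rewrite fus in hl.
  rewrite US exprS -mulrA.
  set w := us - U n in IH hl *.
  set d := 1 - al - fU N (U n) in hl *.
  have h1 : rho * (rho ^+ n * us) <= rho * w by apply: ler_wpM2l.
  have h2 : y * d <= y * (3 / 8 * w) by apply: ler_wpM2l; lra.
  have -> : us - (U n + y * d) = w - y * d by rewrite /w; ring.
  rewrite /rho in h1 *; lra.
set wt := us - U t.
have Hwt : rho ^+ t * us <= wt := Hw t.
have hrt : 0 <= rho ^+ t by apply: exprn_ge0.
have hwt0 : 0 <= wt by have := mulr_ge0 hrt (ltW hus0); lra.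
set X := expR (- (y * t%:R)) * L ^+ 2.
have hX0 : 0 <= X by apply: mulr_ge0; [exact: expR_ge0|apply: sqr_ge0].
have hX1 : X <= 1.
  have hL2 : L ^+ 2 <= expR (y * t%:R).
    have -> : L ^+ 2 = expR (2%:R * ln L) by rewrite expRM_natl lnK // posrE.
    by rewrite ler_expR.
  by rewrite /X expRN mulrC ler_pdivrMr ?expR_gt0 // mul1r.
have hr2 : expR (- y) <= rho ^+ 2.
  have h1 := @expR_ge1Dx R y.
  have h2 : 1 <= rho ^+ 2 * (1 + y) by rewrite /rho; nra.
  have h3 : 1 <= rho ^+ 2 * expR y.
    apply: (le_trans h2); apply: ler_wpM2l => //; exact: sqr_ge0.
  have hE : expR (- y) * expR y = 1 by rewrite mulrC expRxMexpNx_1.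
  have h4 : 0 < expR (- y) by exact: expR_gt0.
  nra.
have hrt2 : expR (- (y * t%:R)) <= (rho ^+ t) ^+ 2.
  rewrite -exprM mulnC exprM.
  have -> : - (y * t%:R) = t%:R * (- y) by ring.
  rewrite expRM_natl; apply: lerXn2r => //; rewrite nnegrE ?expR_ge0 //; exact: sqr_ge0.
have hwX : X / 4 <= wt ^+ 2.
  have h1 : (L / 2) ^+ 2 <= us ^+ 2 by apply: lerXn2r => //; rewrite nnegrE; lra.
  have h2 : (rho ^+ t * us) ^+ 2 <= wt ^+ 2.
    by apply: lerXn2r => //; rewrite nnegrE //; apply: mulr_ge0 => //; lra.
  have h3 : X / 4 <= (rho ^+ t) ^+ 2 * us ^+ 2.
    rewrite /X.
    have -> : expR (- (y * t%:R)) * L ^+ 2 / 4 = expR (- (y * t%:R)) * (L / 2) ^+ 2 by field.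
    by apply: ler_pM; [exact: expR_ge0|exact: sqr_ge0|exact: hrt2|exact: h1].
  rewrite exprMn in h2; lra.
set st := sU N (U t).
set rt := rU N (U t).
have hEU : expR (U t) = Es * expR (- wt).
  by rewrite -Eus -expRD /wt; congr expR; ring.
have hEN0 : 0 < expR (U t) + N by apply: ltr_pwDl; [exact: expR_gt0|lra].
have hst : 0 < st by apply: divr_gt0 => //; exact: expR_gt0.
have hrt0 : 0 < rt by rewrite /rt invr_gt0.
have hsr : st + N * rt = 1 by rewrite /st /rt /sU /rU; field; apply/lt0r_neq0.
have h0N : 0 <= N by lra.
have Hg := gap_hell hq0 hq1 hst hbe hrt0 h0N hqN hsr.
have hqE : q = Es / (Es + N).
  rewrite /Es /q /be /K; field.
  by apply/andP; split; apply/lt0r_neq0; lra.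
have hsE : st = Es * expR (- wt) / (Es * expR (- wt) + N) by rewrite /st /sU hEU.
have Hqs := qs_bound h0N hEs hwt0.
rewrite -hqE -hsE in Hqs.
set m := 1 - expR (- wt) in Hqs.
have hm0 : 0 <= m.
  rewrite /m subr_ge0 expR_le1; lra.
have hm2 : X / 16 <= m ^+ 2.
  case: (lerP wt 1) => hw1.
    have := one_m_expN1 hwt0 hw1; rewrite -/m => hm.
    have : (wt / 2) ^+ 2 <= m ^+ 2 by apply: lerXn2r => //; rewrite nnegrE; lra.
    have -> : (wt / 2) ^+ 2 = wt ^+ 2 / 4 by field.
    lra.
  have := one_m_expN2 (ltW hw1); rewrite -/m => hm.
  have : (1 / 2) ^+ 2 <= m ^+ 2 by apply: lerXn2r => //; rewrite nnegrE; lra.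
  have -> : (1 / 2 : R) ^+ 2 = 1 / 4 by field.
  lra.
have hNb : al / 2 <= N * be.
  rewrite /be /K mulrA ler_pdivlMr; last lra.
  nra.
have hqq : (1 - al) * (al / 2) <= q * (1 - q).
  have -> : 1 - q = N * be by lra.
  apply: ler_pM; lra.
have hqs : (1 - al) * (al / 2) * m <= q - st.
  apply: (le_trans _ Hqs); apply: ler_wpM2r => //.
have hqs2 : ((1 - al) * (al / 2) * m) ^+ 2 <= (q - st) ^+ 2.
  have hA : 0 <= (1 - al) * (al / 2) * m by apply: mulr_ge0 => //; apply: mulr_ge0; lra.
  by apply: lerXn2r => //; rewrite nnegrE //; apply: le_trans hA hqs.
apply: (le_trans _ Hg).
have -> : (1 - al) ^+ 2 * al ^+ 2 / 256 * expR (- (y * t%:R)) * L ^+ 2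
   = ((1 - al) ^+ 2 * al ^+ 2 / 16) * (X / 16) by rewrite /X; field.
have h5 : (1 - al) ^+ 2 * al ^+ 2 / 16 * (X / 16) <= (1 - al) ^+ 2 * al ^+ 2 / 16 * m ^+ 2.
  apply: ler_wpM2l => //; apply: mulr_ge0 => //; apply: mulr_ge0; apply: sqr_ge0.
apply: (le_trans h5).
have -> : (1 - al) ^+ 2 * al ^+ 2 / 16 * m ^+ 2 = ((1 - al) * (al / 2) * m) ^+ 2 / 4 by field.
by apply: ler_wpM2r => //; lra.
Qed.
End A.

Section G.
Variable R : realType.
Variable K : nat.
Implicit Types (E Et W : 'M[R]_K).

Lemma logitE E Et W i j :
  logit E Et W i j = \sum_l (\sum_k Et k i * W k l) * E l j.
Proof.
rewrite /logit !mxE; apply: eq_bigr => l _; rewrite !mxE; congr (_ * _).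
by apply: eq_bigr => k _; rewrite !mxE.
Qed.

Lemma sum_delta2 (F : 'I_K -> 'I_K -> R) a b :
  \sum_l (\sum_k F k l * ((k == a) && (l == b))%:R) = F a b.
Proof.
rewrite (bigD1 b) //= [X in _ + X]big1 ?addr0.
  rewrite (bigD1 a) //= [X in _ + X]big1 ?addr0; first by rewrite !eqxx mulr1.
  by move=> k /negbTE ->; rewrite mulr0.
by move=> l /negbTE Hl; apply: big1 => k _; rewrite Hl andbF mulr0.
Qed.

Lemma logit_shift E Et W a b (h : R) i j :
  logit E Et (W + h *: delta_mx a b) i j = logit E Et W i j + h * (Et a i * E b j).
Proof.
rewrite !logitE.
have -> : \sum_l (\sum_k Et k i * (W + h *: delta_mx a b) k l) * E l j
   = \sum_l (\sum_k Et k i * W k l) * E l j +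
     \sum_l (\sum_k (h * Et k i * E l j) * ((k == a) && (l == b))%:R).
  rewrite -big_split /=; apply: eq_bigr => l _.
  rewrite mulr_suml mulr_suml -big_split /=; apply: eq_bigr => k _.
  rewrite !mxE; ring.
by rewrite (sum_delta2 (fun k l => h * Et k i * E l j)) mulrA.
Qed.

Definition Qs (alpha : R) (j : 'I_K) := \sum_(i < K) pnoise alpha i j.

Lemma sumexp_gt0 (f : 'I_K -> R) (i : 'I_K) : 0 < \sum_k expR (f k).
Proof.
rewrite (bigD1 i) //=; apply: ltr_pwDl; first exact: expR_gt0.
by apply: sumr_ge0 => k _; exact: expR_ge0.
Qed.

Lemma Lj_shift alpha E Et W a b (h : R) j :
  Lj alpha E Et (W + h *: delta_mx a b) j =
  - \sum_i pnoise alpha i j * (logit E Et W i j + h * (Et a i * E b j))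
  + Qs alpha j * ln (\sum_k expR (logit E Et W k j + h * (Et a k * E b j))).
Proof.
rewrite /Lj /phat /Qs.
set x := fun i => logit E Et W i j + h * (Et a i * E b j).
have -> : \sum_i pnoise alpha i j *
   ln (expR (logit E Et (W + h *: delta_mx a b) i j) /
       \sum_k expR (logit E Et (W + h *: delta_mx a b) k j))
   = \sum_i pnoise alpha i j * (x i - ln (\sum_k expR (x k))).
  apply: eq_bigr => i _; congr (_ * _).
  have Ex : forall k, logit E Et (W + h *: delta_mx a b) k j = x k.
    by move=> k; rewrite logit_shift.
  under eq_bigr do rewrite Ex.
  rewrite Ex ln_div ?expRK // posrE ?expR_gt0 //.
  exact: (sumexp_gt0 x i).
rewrite (eq_bigr (fun i => pnoise alpha i j * x i - pnoise alpha i j * ln (\sum_k expR (x k)))); last first.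
  by move=> i _; rewrite mulrBr.
rewrite sumrB -mulr_suml; ring.
Qed.

Lemma dln (f : R -> R) (df x : R) : 0 < f x -> is_derive x 1 f df -> is_derive x 1 (fun h => ln (f h)) ((f x)^-1 * df).
Proof. move=> H0 H; apply: is_derive1_comp; exact: is_derive1_ln. Qed.

Lemma dsum n (f : 'I_n -> R -> R) (df : 'I_n -> R) (x : R) :
  (forall i, is_derive x 1 (f i) (df i)) ->
  is_derive x 1 (fun h => \sum_(i < n) f i h) (\sum_(i < n) df i).
Proof. move=> H; rewrite -fct_sumE; exact: is_derive_sum. Qed.

Lemma daff (z c x : R) : is_derive x 1 (fun h : R => z + h * c) c.
Proof.
have H1 := is_deriveZ c (is_derive_id x (1:R)).
have H2 := is_deriveD (is_derive_cst z x (1:R)) H1.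
rewrite add0r /= in H2.
have -> : (fun h : R => z + h * c) = (cst z + c \*: id) by apply/funext => h /=; rewrite mulrC.
by rewrite -[c in is_derive _ _ _ c]mulr1.
Qed.

Lemma dexpaff (z c : R) : is_derive (0:R) 1 (fun h : R => expR (z + h * c)) (expR z * c).
Proof. have := dexp (daff z c 0); by rewrite mul0r addr0. Qed.

Definition Gmat (p : 'I_K -> R) alpha E Et W : 'M[R]_K :=
  \matrix_(i, j) (p j * (Qs alpha j * phat E Et W i j - pnoise alpha i j)).

Lemma grad_Ltot p alpha E Et W :
  grad (Ltot p alpha E Et) W = Et *m Gmat p alpha E Et W *m E^T.
Proof.
apply/matrixP => a b; rewrite /grad mxE.
set z := logit E Et W.
set c := fun i j => Et a i * E b j.
have -> : (fun h => Ltot p alpha E Et (W + h *: delta_mx a b)) =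
  (fun h => \sum_j p j * (- \sum_i pnoise alpha i j * (z i j + h * c i j)
       + Qs alpha j * ln (\sum_k expR (z k j + h * c k j)))).
  by apply/funext => h; rewrite /Ltot; apply: eq_bigr => j _; rewrite Lj_shift.
have D : is_derive (0:R) 1
  (fun h => \sum_j p j * (- \sum_i pnoise alpha i j * (z i j + h * c i j)
       + Qs alpha j * ln (\sum_k expR (z k j + h * c k j))))
  (\sum_j p j * (- \sum_i pnoise alpha i j * c i j
       + Qs alpha j * ((\sum_k expR (z k j))^-1 *
            \sum_k (expR (z k j) * c k j)))).
  apply: dsum => j; apply: dZ; apply: dD.
    apply: dN; apply: dsum => i; apply: dZ; exact: daff.
  apply: dZ.
  have -> : \sum_k expR (z k j) = \sum_k expR (z k j + 0 * c k j).
    by apply: eq_bigr => k _; rewrite mul0r addr0.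
  apply: dln.
    by apply: (sumexp_gt0 (fun k => z k j + 0 * c k j) j).
  by apply: dsum => k; apply: dexpaff.
rewrite derive1E (@derive_val _ _ _ _ _ _ _ D).
rewrite !mxE; apply: eq_bigr => j _.
rewrite !mxE mulr_suml.
under [in RHS]eq_bigr do rewrite !mxE.
rewrite /phat -/z.
set S := \sum_k expR (z k j).
rewrite -sumrN (mulr_sumr _ _ _ S^-1) (mulr_sumr _ _ _ (Qs alpha j)) -big_split mulr_sumr /=.
apply: eq_bigr => i _.
rewrite /c; ring.
Qed.


Lemma logit_Z E Et W i j : logit E Et W i j = (Et^T *m W *m E) i j.
Proof.
rewrite logitE !mxE; apply: eq_bigr => l _; rewrite !mxE; congr (_ * _).
by apply: eq_bigr => k _; rewrite !mxE.
Qed.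

Lemma logit_step p alpha E Et W (eta : R) i j :
  orthonormal_cols E -> orthonormal_cols Et ->
  logit E Et (W - eta *: grad (Ltot p alpha E Et) W) i j =
  logit E Et W i j - eta * (p j * (Qs alpha j * phat E Et W i j - pnoise alpha i j)).
Proof.
rewrite /orthonormal_cols => HE HEt.
rewrite !logit_Z grad_Ltot.
have -> : Et^T *m (W - eta *: (Et *m Gmat p alpha E Et W *m E^T)) *m E
   = Et^T *m W *m E - eta *: Gmat p alpha E Et W.
  rewrite mulmxBr mulmxBl -scalemxAr -scalemxAl; congr (_ - _ *: _).
  by rewrite !mulmxA HEt mul1mx -mulmxA HE mulmx1.
by rewrite !mxE.
Qed.

Lemma sum_if (j : 'I_K) (F : 'I_K -> R) (x y : R) :
  (forall i, F i = if i == j then x else y) ->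
  \sum_(i < K) F i = x + (K%:R - 1) * y.
Proof.
move=> HF.
have HK : (0 < K)%N by apply: leq_ltn_trans (leq0n _) (ltn_ord j).
rewrite (bigD1 j) //= HF eqxx; congr (_ + _).
rewrite (eq_bigr (fun _ => y)); last by move=> i /negbTE Hi; rewrite HF Hi.
rewrite sumr_const cardC1 card_ord.
rewrite -[in RHS](prednK HK) -addn1 natrD addrK mulr_natl //.
Qed.

Lemma Qs1 alpha (j : 'I_K) : Qs alpha j = 1.
Proof.
have HK : (0 < K)%N by apply: leq_ltn_trans (leq0n _) (ltn_ord j).
rewrite /Qs (@sum_if j _ (1 - alpha + alpha / K%:R) (alpha / K%:R)) //.
field; rewrite pnatr_eq0 -lt0n //.
Qed.

Lemma phat_struct E Et W (j : 'I_K) (A B : R) :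
  (forall i, logit E Et W i j = if i == j then A else B) ->
  forall i, phat E Et W i j =
    (if i == j then expR A else expR B) / (expR A + (K%:R - 1) * expR B).
Proof.
move=> H i; rewrite /phat H.
have -> : (if i == j then expR A else expR B) = expR (if i == j then A else B).
  by case: (i == j).
congr (_ / _); apply: (sum_if (j := j)) => k; rewrite H; by case: (k == j).
Qed.

Lemma dyn_struct p alpha E Et (eta : R) (j : 'I_K) (U : nat -> R) :
  orthonormal_cols E -> orthonormal_cols Et ->
  U 0%N = 0 ->
  (forall n, U n.+1 = U n + eta * p j * ((1 - alpha) - fU (K%:R - 1) (U n))) ->
  forall n, exists A B,
    (forall i, logit E Et (gd_iter (Ltot p alpha E Et) eta n) i j = if i == j then A else B)
    /\ A - B = U n.
Proof.
move=> HE HEt U0 US; elim => [|n [A [B [H HU]]]].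
  exists 0, 0; split; last by rewrite U0 subrr.
  by move=> i; rewrite /gd_iter /= logit_Z mulmx0 mul0mx mxE; case: (i == j).
set N : R := K%:R - 1.
set D := expR A + N * expR B.
have HK : (0 < K)%N by apply: leq_ltn_trans (leq0n _) (ltn_ord j).
have hN : 0 <= N by rewrite /N subr_ge0 ler1n.
have hD : 0 < D by rewrite /D; apply: ltr_pwDl; [exact: expR_gt0|apply: mulr_ge0 => //; exact: expR_ge0].
have hB : 0 < expR B by exact: expR_gt0.
exists (A - eta * (p j * (expR A / D - (1 - alpha + alpha / K%:R)))),
       (B - eta * (p j * (expR B / D - alpha / K%:R))).
split.
  move=> i; rewrite /gd_iter iterS -/(gd_iter _ _ n) logit_step // Qs1 mul1r H.
  rewrite (phat_struct H) -/N -/D /pnoise.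
  by case: (i == j).
rewrite US -HU /fU expRB.
rewrite -/N.
have -> : expR A / expR B + N = D / expR B by rewrite /D /N; field; apply/lt0r_neq0.
move: hD hB; rewrite /D /N => hD hB; field.
have hK0 : (0:R) < K%:R by rewrite ltr0n.
by rewrite !lt0r_neq0.
Qed.

Lemma Lj_gap alpha E Et W (j : 'I_K) (A B : R) :
  (forall i, logit E Et W i j = if i == j then A else B) ->
  Lj alpha E Et W j - Lstar K alpha =
  (1 - alpha + alpha / K%:R) * (ln (1 - alpha + alpha / K%:R) - ln (sU (K%:R - 1) (A - B)))
  + (K%:R - 1) * (alpha / K%:R) * (ln (alpha / K%:R) - ln (rU (K%:R - 1) (A - B))).
Proof.
move=> H.
have HK : (0 < K)%N by apply: leq_ltn_trans (leq0n _) (ltn_ord j).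
have hK0 : (0:R) < K%:R by rewrite ltr0n.
have hN : (0:R) <= K%:R - 1 by rewrite subr_ge0 ler1n.
have hB : 0 < expR B by exact: expR_gt0.
have hD : 0 < expR A + (K%:R - 1) * expR B.
  by apply: ltr_pwDl; [exact: expR_gt0|apply: mulr_ge0 => //; exact: expR_ge0].
have Hs : sU (K%:R - 1) (A - B) = expR A / (expR A + (K%:R - 1) * expR B).
  rewrite /sU expRB.
  have -> : expR A / expR B + (K%:R - 1) = (expR A + (K%:R - 1) * expR B) / expR B.
    by field; rewrite lt0r_neq0.
  by field; rewrite !lt0r_neq0.
have Hr : rU (K%:R - 1) (A - B) = expR B / (expR A + (K%:R - 1) * expR B).
  rewrite /rU expRB.
  have -> : expR A / expR B + (K%:R - 1) = (expR A + (K%:R - 1) * expR B) / expR B.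
    by field; rewrite lt0r_neq0.
  by rewrite invf_div.
rewrite /Lj (@sum_if j _ ((1 - alpha + alpha / K%:R) * ln (sU (K%:R - 1) (A - B)))
                         ((alpha / K%:R) * ln (rU (K%:R - 1) (A - B)))); last first.
  move=> i; rewrite (phat_struct H) Hs Hr /pnoise.
  by case: (i == j).
rewrite /Lstar.
have -> : alpha * (K%:R - 1) / K%:R = (K%:R - 1) * (alpha / K%:R) by field; rewrite lt0r_neq0.
ring.
Qed.
End G.

Fixpoint Useq (R : realType) (al N y : R) (n : nat) : R :=
  match n with
  | 0%N => 0
  | n'.+1 => Useq al N y n' + y * ((1 - al) - fU N (Useq al N y n'))
  end.

Unset Implicit Arguments.

Theorem theorem5p5 (R : realType) (alpha : R) (halpha : 0 < alpha < 1) :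
  exists (A K0 c_eta c_t c : R),
    0 < A /\ 0 < K0 /\ 0 < c_eta /\ 0 < c_t /\ 0 < c /\
    forall (M C : nat) (pt : 'I_M -> R) (E Et : 'M[R]_(M * C)) (eta : R)
           (j : 'I_(M * C)) (t : nat),
      K0 <= (M * C)%:R ->
      A * M%:R <= C%:R ->
      (forall i1 i2 : 'I_M, (i1 < i2)%N -> pt i2 < pt i1) ->
      (forall i : 'I_M, 0 < pt i) ->
      \sum_(i < M) pt i = 1 ->
      orthonormal_cols E -> orthonormal_cols Et ->
      0 < eta ->
      (forall i : 'I_M, nat_of_ord i = 0%N -> eta * (pt i / C%:R) <= c_eta) ->
      c_t * ln (ln (M * C)%:R) / (eta * pgroup pt j) <= t%:R ->
      Lj alpha E Et
         (gd_iter (Ltot (pgroup pt) alpha E Et) eta t) j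
        - Lstar (M * C) alpha
      >= c * expR (- (eta * pgroup pt j * t%:R)) * (ln (M * C)%:R) ^+ 2.

Proof.
case/andP: halpha => ha0 ha1.
have ha1' : 0 < 1 - alpha by lra.
have hinv : 0 <= 1 / (1 - alpha) ^+ 2 by apply: divr_ge0; [lra|apply: sqr_ge0].
exists 1, (3 + 1 / (1 - alpha) ^+ 2), (1 / 4), 2, ((1 - alpha) ^+ 2 * alpha ^+ 2 / 256).
split; first lra. split; first lra. split; first lra. split; first lra.
split.
  apply: divr_gt0; last lra.
  by apply: mulr_gt0; apply: exprn_gt0.
move=> M C pt E Et eta j t HK0 HA Hdec Hpos Hsum HE HEt heta Heta Ht.
have [N HN] : exists N : R, (M * C)%:R = N + 1 by exists ((M * C)%:R - 1); ring.
set y := eta * pgroup pt j.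
have [A [B [Hs HU]]] := @dyn_struct R (M * C) (pgroup pt) alpha E Et eta j
   (Useq alpha ((M * C)%:R - 1) y) HE HEt (erefl _) (fun n => erefl _) t.
rewrite (@Lj_gap R (M * C) alpha E Et _ j A B Hs) HU HN addrK.
have hM : (0 < M)%N := leq_ltn_trans (leq0n _) (ltn_ord (grp j)).
have hMC : (0 < M * C)%N := leq_ltn_trans (leq0n _) (ltn_ord j).
have hC : (0 < C)%N by move: hMC; rewrite muln_gt0 => /andP [].
have hC0 : (0 : R) < C%:R by rewrite ltr0n.
have hp : 0 < pgroup pt j by rewrite /pgroup; apply: divr_gt0.
have hy0 : 0 < y by apply: mulr_gt0.
set i0 : 'I_M := Ordinal hM.
have hpt : pt (grp j) <= pt i0.
  case: (eqVneq (grp j) i0) => [->|hne]; first by [].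
  apply: ltW; apply: Hdec.
  rewrite /= lt0n; apply/eqP => h; move/eqP: hne; apply; apply/val_inj; by rewrite /= h.
have hy1 : y <= 1 / 4.
  apply: le_trans (Heta i0 erefl).
  rewrite /y /pgroup; apply: ler_wpM2l; first lra.
  by apply: ler_wpM2r => //; rewrite invr_ge0 ltW.
rewrite HN in HK0 Ht.
apply: main_analytic => //.
- lra.
- lra.
- move: Ht; rewrite ler_pdivrMr // mulrC /y [t%:R * _]mulrC //.
Qed.
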